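(* Let $G$ be a finite simple graph with $n$ vertices $v_1,\dots,v_n$, and let $\bar{\bar{d}}(G)=\sqrt{\frac{d(v_1)^2+d(v_2)^2+\cdots+d(v_n)^2}{n}}$, where $d(v)$ denotes the degree of $v$. Then $$\varphi(G)\geq \frac{n}{n-\bar{\bar{d}}(G)}.$$ Moreover, equality holds if and only if $n\equiv 0 \pmod{\varphi(G)}$ and $G$ is a regular graph of degree $\frac{n(\varphi(G)-1)}{\varphi(G)}$.
   Context: All graphs are finite, undirected, without loops or multiple edges. For a graph $G$ with $n$ vertices, a set $V\subseteq V(G)$ is called a $\delta$-set in $G$ if $d(v)\leq n-|V|$ for every $v\in V$. The graph $G$ is called a generalized $r$-partite graph if there is a partition $V(G)=V_1\cup\dots\cup V_r$ into pairwise disjoint sets each of which is a $\delta$-set in $G$. The invariant $\varphi(G)$ is the smallest integer $r$ such that $G$ is a generalized $r$-partite graph. *)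

(* Defs.v *)
From mathcomp Require Import all_boot all_order all_algebra.
Set Implicit Arguments. Unset Strict Implicit. Unset Printing Implicit Defensive.

(* A finite simple graph is a symmetric irreflexive relation [e] on a finType
   [T]; the hypotheses symmetric/irreflexive are stated in the theorem. *)
Section GraphDefs.
Variables (T : finType) (e : rel T).

Definition deg (v : T) : nat := #|[set w | e v w]|.

Definition delta_set (V : {set T}) : bool :=
  [forall v in V, deg v <= #|T| - #|V|].

Definition gen_partite (r : nat) : bool :=
  [exists f : {ffun T -> 'I_r}, [forall i : 'I_r, delta_set [set v | f v == i]]].

(* varphi(G): the least r such that G is generalized r-partite.
   (For a loopless graph, r = #|T| always works, so the minimum exists;
   the fallback value 0 is never used for simple graphs.) *)
Definition varphi : nat :=
  match @idP (gen_partite #|T|) with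
  | ReflectT H => ex_minn (ex_intro (fun r => gen_partite r) #|T| H)
  | ReflectF _ => 0
  end.
End GraphDefs.

(* Main.v *)
Require Import Defs.
From mathcomp Require Import all_boot all_order all_algebra.
From mathcomp Require Import ring lra zify.
Import Order.TTheory GRing.Theory Num.Theory.
Local Open Scope ring_scope.

Lemma L1 (R : rcfType) (r c n : R) : 0 < c -> 2 <= r -> r * c = n -> 2 * c <= n.
Proof. move=> *; nra. Qed.
Lemma L2 (R : rcfType) (x y : R) : 0 <= x -> x <= y -> x ^+ 2 <= y ^+ 2.
Proof. move=> *; nra. Qed.
Lemma L3 (R : rcfType) (x y : R) : 0 <= x -> x <= y -> x ^+ 2 = y ^+ 2 -> x = y.
Proof. move=> *; nra. Qed.
Lemma L4 (R : rcfType) (x p : R) : 0 <= p -> x - p <= x.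
Proof. move=> *; lra. Qed.
Lemma L5 (R : rcfType) (a c n : R) : a <= n -> 2 * c <= n -> 0 <= 2 * n - 2 * c - a.
Proof. move=> *; lra. Qed.
Lemma L6 {R : rcfType} {a c n : R} : a <= n -> 2 * c <= n -> 2 * n - 2 * c - a = 0 -> a = n /\ 2 * c = n.
Proof. move=> *; split; lra. Qed.
Lemma L7 {R : rcfType} {n c : R} : 0 < n -> 0 < c -> 2 * c = n -> 0 = n * (n - c) ^+ 2 -> False.
Proof.
move=> hn hc h2 h; have e : n - c = c by lra.
rewrite e in h; have : 0 < n * c ^+ 2 by rewrite mulr_gt0 // exprn_gt0.
by rewrite -h ltxx.
Qed.

Lemma tangent (R : rcfType) (n c a : R) :
  a * (n - a) ^+ 2 = (c * (n - c) ^+ 2 + (n - c) * (n - 3 * c) * (a - c))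
     - (a - c) ^+ 2 * (2 * n - 2 * c - a).
Proof. ring. Qed.

Lemma key (R : rcfType) (T : finType) (e : rel T) (r : nat) (f : {ffun T -> 'I_r})
  (n_pos : (0 < #|T|)%N) (r_pos : (0 < r)%N)
  (Hf : forall i, delta_set e [set v | f v == i]) :
  let n : R := #|T|%:R in let c := n / r%:R in
  let S := \sum_(v : T) (deg e v)%:R ^+ 2 in
  S <= n * (n - c) ^+ 2 /\
  (S = n * (n - c) ^+ 2 ->
    (forall i, (#|[set v | f v == i]|)%:R = c) /\ forall v, (deg e v)%:R = n - c).
Proof.
move=> n c S.
set a := fun i => #|[set v | f v == i]|.
have Ha : forall i, (a i <= #|T|)%N by move=> i; exact: max_card.
have Hdeg : forall v, (deg e v <= #|T| - a (f v))%N.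
  move=> v; move/forallP: (Hf (f v)) => /(_ v); by rewrite inE eqxx.
have HD : forall v, (deg e v)%:R <= n - (a (f v))%:R :> R.
  by move=> v; rewrite -natrB // ler_nat.
have Hn : 0 < n by rewrite ltr0n.
have Hr : 0 < r%:R :> R by rewrite ltr0n.
have Hrc : r%:R * c = n by rewrite /c mulrC divfK // gt_eqF.
have Hc0 : 0 < c by rewrite divr_gt0.
have Hsum : \sum_i (a i)%:R = n :> R.
  have -> : n = \sum_(v : T) (1 : R).
    by rewrite /n -sum1_card natr_sum.
  rewrite (partition_big (fun v => f v) xpredT) //=; apply: eq_bigr => i _.
  rewrite sumr_const; congr (_ *+ _); apply: eq_card => v; by rewrite inE.
have HX : \sum_(v : T) (n - (a (f v))%:R) ^+ 2
          = \sum_i (a i)%:R * (n - (a i)%:R) ^+ 2.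
  rewrite (partition_big (fun v => f v) xpredT) //=; apply: eq_bigr => i _.
  rewrite (eq_bigr (fun _ => (n - (a i)%:R) ^+ 2)); last by move=> v /eqP ->.
  rewrite sumr_const mulr_natl; congr (_ *+ _).
  apply: eq_card => v; by rewrite inE.
have Hr1 : r = 1%N -> forall i, (a i)%:R = c.
  move=> r1 i.
  have Hall : forall v, f v == i.
    move=> v; case: (f v) => x hx; case: i => y hy; apply/eqP/val_inj => /=.
    move: hx hy; rewrite r1; lia.
  rewrite /a (_ : [set v | f v == i] = setT); last by apply/setP => v; rewrite !inE Hall.
  by rewrite cardsT /c r1 divr1.
have H2c : (1 < r)%N -> 2 * c <= n.
  move=> r2; apply: (@L1 _ r%:R) => //; by rewrite ler_nat.
have Hterm : forall i, 0 <= ((a i)%:R - c) ^+ 2 * (2 * n - 2 * c - (a i)%:R).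
  move=> i; case: (ltngtP r 1) => [|r2|r1].
  - by rewrite ltnS leqn0 => /eqP r0; rewrite r0 in r_pos.
  - have := H2c r2; have : (a i)%:R <= n :> R by rewrite ler_nat.
    move=> h1 h2; apply: mulr_ge0; [exact: sqr_ge0| exact: L5].
  - by rewrite Hr1 // subrr expr0n mul0r.
set tan := fun i : 'I_r => c * (n - c) ^+ 2 + (n - c) * (n - 3 * c) * ((a i)%:R - c).
have Htan : forall i, (a i)%:R * (n - (a i)%:R) ^+ 2 <= tan i.
  move=> i; rewrite (tangent _ n c) /tan; exact: L4.
have Htsum : \sum_i tan i = n * (n - c) ^+ 2.
  rewrite /tan big_split /= sumr_const card_ord -mulr_sumr sumrB Hsum sumr_const card_ord.
  rewrite -(mulr_natl (c * _)) -(mulr_natl c) Hrc mulrA Hrc; ring.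
have HSX : S <= \sum_(v : T) (n - (a (f v))%:R) ^+ 2.
  rewrite /S; apply: ler_sum => v _.
  have := HD v; have : 0 <= (deg e v)%:R :> R by rewrite ler0n.
  move=> h1 h2; exact: L2.
have HYT : \sum_i (a i)%:R * (n - (a i)%:R) ^+ 2 <= \sum_i tan i.
  by apply: ler_sum => i _.
split; first by rewrite -Htsum (le_trans HSX) // HX.
move=> HS.
have HXS : \sum_(v : T) (n - (a (f v))%:R) ^+ 2 <= S by rewrite HX HS -Htsum.
have HD2 : forall v, (deg e v)%:R = n - (a (f v))%:R.
  have H0 : \sum_(v : T) ((n - (a (f v))%:R) ^+ 2 - (deg e v)%:R ^+ 2) = 0.
    rewrite sumrB; apply/eqP; rewrite subr_eq0 eq_le HXS HSX //.
  have Hnn : forall w : T, true -> 0 <= (n - (a (f w))%:R) ^+ 2 - (deg e w)%:R ^+ 2.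
    move=> w _; rewrite subr_ge0; apply: L2; [by rewrite ler0n | exact: HD].
  move=> v; apply: L3; [by rewrite ler0n | exact: HD |].
  by have /eqP := psumr_eq0P Hnn H0 (i:=v) isT; rewrite subr_eq0 => /eqP ->.
have HYeq : \sum_i (tan i - (a i)%:R * (n - (a i)%:R) ^+ 2) = 0.
  rewrite sumrB; apply/eqP; rewrite subr_eq0 eq_le HYT -HX Htsum -HS HSX.
  done.
have Hprod : forall i, ((a i)%:R - c) ^+ 2 * (2 * n - 2 * c - (a i)%:R) = 0.
  have Hnn : forall j, true -> 0 <= tan j - (a j)%:R * (n - (a j)%:R) ^+ 2.
    by move=> j _; rewrite subr_ge0.
  move=> i; have := psumr_eq0P Hnn HYeq (i:=i) isT.
  rewrite (tangent _ n c) -/(tan i) => <-; ring.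
have Hai : forall i, (a i)%:R = c.
  move=> i; case: (ltngtP r 1) => [|r2|r1].
  - by rewrite ltnS leqn0 => /eqP r0; rewrite r0 in r_pos.
  - move/eqP: (Hprod i); rewrite mulf_eq0 expf_eq0 /= subr_eq0 => /orP [/eqP //|/eqP h].
    have hn : (a i)%:R <= n :> R by rewrite ler_nat.
    have [h1 h2] := L6 hn (H2c r2) h.
    have hai : a i = #|T| by apply/eqP; rewrite -(eqr_nat R) h1.
    have Hall : forall v, f v == i.
      move=> v; have := in_setT v.
      suff -> : [set: T] = [set v | f v == i] by rewrite inE.
      apply/eqP; rewrite eq_sym eqEcard subsetT cardsT /=; by move: hai; rewrite /a => ->.
    have S0 : S = 0.
      rewrite /S big1 // => v _; rewrite HD2 (eqP (Hall v)) h1 subrr expr0n.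
      done.
    exfalso; apply: (L7 Hn Hc0 h2); by rewrite -S0.
  - exact: Hr1.
split=> [i|v]; first exact: Hai.
by rewrite HD2 Hai.
Qed.


Lemma varphi_spec (T : finType) (e : rel T) : irreflexive e -> gen_partite e (varphi e).
Proof.
move=> e_irr; rewrite /varphi; destruct (@idP (gen_partite e #|T|)) as [H|H].
  by case: ex_minnP.
exfalso; apply: H; apply/existsP; exists [ffun v => enum_rank v].
apply/forallP => i; apply/forallP => v; apply/implyP; rewrite inE ffunE => /eqP Hv.
have Hc : (#|[set v0 | [ffun v1 => enum_rank v1] v0 == i]| <= 1)%N.
  rewrite -(cards1 v); apply: subset_leq_card; apply/subsetP => w.
  by rewrite !inE ffunE -Hv => /eqP /enum_rank_inj ->.
have Hd : (deg e v <= #|T|.-1)%N.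
  rewrite /deg -(cardsC1 v); apply: subset_leq_card; apply/subsetP => w.
  rewrite !inE; apply: contraTN => /eqP ->; by rewrite e_irr.
apply: (leq_trans Hd); rewrite -subn1; exact: leq_sub2l.
Qed.

Lemma G1 {R : rcfType} {r c n d : R} : 0 < r -> r * c = n -> c <= n - d -> n <= r * (n - d).
Proof. move=> *; nra. Qed.
Lemma G2 {R : rcfType} {c n d : R} : d <= n - c -> c <= n - d.
Proof. move=> *; lra. Qed.

Theorem theorem1p1 (R : rcfType) (T : finType) (e : rel T)
  (e_sym : symmetric e) (e_irr : irreflexive e) (n_pos : (0 < #|T|)%N) :
  let n : R := (#|T|)%:R in
  let dd : R := Num.sqrt ((\sum_(v : T) ((deg e v) ^ 2)%:R) / n) in
  let phi := varphi e in
  n / (n - dd) <= phi%:R /\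
  (phi%:R = n / (n - dd) <->
     ((#|T| %% phi)%N = 0%N /\
      forall v : T, (deg e v)%:R = n * (phi%:R - 1) / phi%:R)).
Proof.
move=> n dd phi; rewrite /phi; clear phi.
move: (varphi e) (varphi_spec _ _ e_irr) => r /existsP [f /forallP Hf].
have r_pos : (0 < r)%N.
  case: r f Hf => [f _|//]; have [v _] := card_gt0P n_pos; by case: (f v).
have [Hle Heq] := key R T e r f n_pos r_pos Hf.
have HS : \sum_(v : T) ((deg e v) ^ 2)%:R = \sum_(v : T) (deg e v)%:R ^+ 2 :> R.
  by apply: eq_bigr => v _; rewrite natrX.
rewrite HS in dd *.
set S := \sum_(v : T) (deg e v)%:R ^+ 2 in Hle Heq dd *.
set c := n / r%:R in Hle Heq *.
have Hn : 0 < n by rewrite ltr0n.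
have Hr : 0 < r%:R :> R by rewrite ltr0n.
have Hrc : r%:R * c = n by rewrite /c mulrC divfK // gt_eqF.
have Hc0 : 0 < c by rewrite divr_gt0.
have Hcn : c <= n by rewrite /c ler_pdivrMr // ler_peMr // ?ler1n // ltW.
have Hdd : dd <= n - c.
  rewrite /dd -(ger0_norm (x := n - c)) ?subr_ge0 // -sqrtr_sqr ler_wsqrtr //.
  by rewrite ler_pdivrMr // mulrC.
have Hdd0 : 0 <= dd by exact: sqrtr_ge0.
have Hpos : 0 < n - dd by apply: (lt_le_trans Hc0); rewrite lerBrDl -lerBrDr.
have Hrne : r%:R != 0 :> R by rewrite gt_eqF.
have Hcm : n - c = n * (r%:R - 1) / r%:R by rewrite /c; field.
split.
  rewrite ler_pdivrMr //; apply: (le_trans (G1 Hr Hrc (G2 Hdd))); by rewrite mulrC.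
split.
- move=> Hphi.
  have H1 : r%:R * (n - dd) = n by rewrite Hphi divfK // gt_eqF.
  have H2 : dd = n - c.
    apply: (mulfI Hrne); rewrite mulrBr Hrc; move: H1; rewrite mulrBr => H1.
    by rewrite -{2}H1 opprB addrC subrK.
  have H3 : S = n * (n - c) ^+ 2.
    have : dd ^+ 2 = (n - c) ^+ 2 by rewrite H2.
    rewrite /dd sqr_sqrtr; last first.
      apply: divr_ge0; last exact: ltW.
      by rewrite /S; apply: sumr_ge0 => v _; rewrite sqr_ge0.
    move=> h; by rewrite -h mulrC divfK // gt_eqF.
  have [Ha Hd] := Heq H3.
  split; last by move=> v; rewrite Hd.
  have := Ha (Ordinal r_pos); rewrite /c => h.
  have : (r * #|[set v | f v == Ordinal r_pos]|)%:R = n :> R.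
    by rewrite natrM h mulrC divfK.
  move/eqP; rewrite /n eqr_nat => /eqP <-; exact: modnMr.
- move=> [_ Hd].
  set m := n * (r%:R - 1) / r%:R in Hd Hcm.
  have Hm0 : 0 <= m.
    rewrite /m; apply: divr_ge0; last exact: ltW.
    apply: mulr_ge0; first exact: ltW.
    by rewrite subr_ge0 ler1n.
  have HSm : S = n * m ^+ 2.
    rewrite /S (eq_bigr (fun _ => m ^+ 2)); last by move=> v _; rewrite Hd.
    by rewrite sumr_const -mulr_natl.
  have Hddm : dd = m.
    by rewrite /dd HSm (mulrC n) mulfK ?gt_eqF // sqrtr_sqr ger0_norm.
  rewrite Hddm -Hcm /c; field.
  by rewrite Hrne /= opprB addrC subrK pnatr_eq0 -lt0n.
Qed.
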